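(* The sets $\{123,2413,3142\}$ and $\{132,2314,3124\}$ are forest-Wilf equivalent.
   Context: A rooted labeled forest on $[n]$ is an unordered forest on $n$ vertices, each component with a distinguished root, with distinct labels from $[n]$. For a pattern (permutation) $\pi$ of $[k]$, an instance is a sequence of vertices $v_1,\dots,v_k$ with $v_i$ a strict ancestor of $v_{i+1}$ whose labels are in the same relative order as $\pi$; a forest avoids a set of patterns if it contains no instance of any of them. Two sets are forest-Wilf equivalent if for every $n\ge 0$ the numbers of rooted labeled forests on $[n]$ avoiding each set are equal. *)

(* Defs.v *)
From mathcomp Require Import all_boot.
Set Implicit Arguments. Unset Strict Implicit. Unset Printing Implicit Defensive.

(* A rooted labeled forest on [n] (vertices 'I_n, i.e. labels 0..n-1 standing
   for 1..n) is encoded by its parent function: par v = None iff v is a root,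
   par v = Some u iff u is the parent of v.  Rooted labeled forests on [n]
   are in bijection with acyclic parent functions. *)
Definition parent_fun (n : nat) := {ffun 'I_n -> option 'I_n}.

Definition up (n : nat) (par : parent_fun n) (x : option 'I_n) : option 'I_n :=
  obind par x.

Definition is_forest (n : nat) (par : parent_fun n) : bool :=
  [forall v : 'I_n, iter n (up par) (Some v) == None].

Definition strict_anc (n : nat) (par : parent_fun n) (u v : 'I_n) : bool :=
  [exists k : 'I_n.+1, (0 < k) && (iter k (up par) (Some v) == Some u)].

(* patterns are permutations of [k] written as sequences, e.g. [:: 2;4;1;3] *)
Definition pattern := seq nat.

Definition is_instance (n : nat) (par : parent_fun n) (pi : pattern)
    (t : (size pi).-tuple 'I_n) : bool :=
  [forall i : 'I_(size pi), forall j : 'I_(size pi),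
     ((i.+1 == j :> nat) ==> strict_anc par (tnth t i) (tnth t j)) &&
     ((tnth t i < tnth t j) == (nth 0 pi i < nth 0 pi j))].

Definition contains (n : nat) (par : parent_fun n) (pi : pattern) : bool :=
  [exists t : (size pi).-tuple 'I_n, is_instance par t].

Definition avoids (n : nat) (par : parent_fun n) (S : seq pattern) : bool :=
  all (fun pi => ~~ contains par pi) S.

Definition num_avoiding (S : seq pattern) (n : nat) : nat :=
  #|[set par : parent_fun n | is_forest par && avoids par S]|.

Definition forest_wilf_equiv (S1 S2 : seq pattern) : Prop :=
  forall n : nat, num_avoiding S1 n = num_avoiding S2 n.

(* Main.v *)
Require Import Defs.
From mathcomp Require Import all_boot zify.
Set Implicit Arguments. Unset Strict Implicit. Unset Printing Implicit Defensive.

(* Proof idea: the map Phi relabels a forest by reversing the labels inside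
   every maximal connected set of "upper" vertices (vertices having a smaller
   ancestor).  It is an involution exchanging forests avoiding
   {123,2413,3142} and forests avoiding {132,2314,3124}. *)

Section Gen.
Variable n : nat.
Variable par : parent_fun n.
Hypothesis F : is_forest par.

Local Notation anc := (strict_anc par).

Lemma iter_up_None k : iter k (up par) None = None.
Proof. by elim: k => //= k ->. Qed.

Lemma iter_up_ge v k : n <= k -> iter k (up par) (Some v) = None.
Proof.
move=> h; rewrite -(subnK h) iterD.
by have /eqP -> := forallP F v; rewrite iter_up_None.
Qed.

Lemma ancP u v : reflect (exists2 k, 0 < k & iter k (up par) (Some v) = Some u) (anc u v).
Proof.
apply: (iffP existsP) => [[k /andP[k0 /eqP e]]|[k k0 e]].
  by exists k.
have kn : k < n.+1.
  rewrite ltnS leqNgt; apply/negP => h.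
  by rewrite (iter_up_ge _ (ltnW h)) in e.
by exists (Ordinal kn); rewrite /= k0 e eqxx.
Qed.

Lemma anc_trans a b c : anc a b -> anc b c -> anc a c.
Proof.
move=> /ancP[k1 k10 e1] /ancP[k2 k20 e2]; apply/ancP; exists (k1 + k2).
  by rewrite addn_gt0 k10.
by rewrite iterD e2 e1.
Qed.

Lemma iter_mul v k m : iter k (up par) (Some v) = Some v -> iter (k * m) (up par) (Some v) = Some v.
Proof.
move=> e; elim: m => [|m IH]; first by rewrite muln0.
by rewrite mulnS iterD IH e.
Qed.

Lemma anc_irr v : anc v v = false.
Proof.
apply/negbTE/negP => /ancP[k k0 e].
have := iter_mul n e; rewrite iter_up_ge //.
by rewrite -{1}(mul1n n) leq_mul2r k0 orbT.
Qed.

Lemma anc_neq u v : anc u v -> u != v.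
Proof. by apply: contraTneq => ->; rewrite anc_irr. Qed.

Lemma anc_asym u v : anc u v -> anc v u -> False.
Proof. by move=> h1 h2; have := anc_trans h1 h2; rewrite anc_irr. Qed.

Lemma anc_total a b c : anc a c -> anc b c -> [\/ a = b, anc a b | anc b a].
Proof.
move=> /ancP[k1 k10 e1] /ancP[k2 k20 e2].
case: (leqP k1 k2) => h.
  move: e2; rewrite -(subnK h) iterD e1 => e.
  case: (posnP (k2 - k1)) => h0.
    by move: e; rewrite h0 /= => -[->]; constructor 1.
  by constructor 3; apply/ancP; exists (k2 - k1).
move: e1; rewrite -(subnK (ltnW h)) iterD e2 => e.
by constructor 2; apply/ancP; exists (k1 - k2); rewrite ?subn_gt0.
Qed.

Lemma par_anc v p : par v = Some p -> anc p v.
Proof. by move=> e; apply/ancP; exists 1. Qed.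

Lemma anc_par u v p : anc u v -> par v = Some p -> u = p \/ anc u p.
Proof.
move=> /ancP[[|k] // _ e] ep.
move: e; rewrite iterSr /= ep.
case: k => [[->]|k e]; [by left|right].
by apply/ancP; exists k.+1.
Qed.

Definition upper v := [exists u, anc u v && (u < v)].

Lemma lower_lt u v : ~~ upper v -> anc u v -> v < u.
Proof.
move=> /existsPn /(_ u); rewrite negb_and => /orP[/negPf->//|h] a.
rewrite ltn_neqAle leqNgt h andbT.
by apply/eqP => /val_inj e; move: a; rewrite e anc_irr.
Qed.

Lemma upperI u v : anc u v -> u < v -> upper v.
Proof. by move=> a l; apply/existsP; exists u; rewrite a l. Qed.

Definition isMin m v := anc m v && [forall u, anc u v ==> (m <= u)].
Definition lowAnc v := odflt v [pick m | isMin m v].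

Lemma isMin_uniq m1 m2 v : isMin m1 v -> isMin m2 v -> m1 = m2.
Proof.
move=> /andP[a1 /forallP h1] /andP[a2 /forallP h2]; apply/val_inj/eqP.
by rewrite eqn_leq (implyP (h1 m2) a2) (implyP (h2 m1) a1).
Qed.

Lemma isMin_ex u v : anc u v -> isMin (lowAnc v) v.
Proof.
move=> a; rewrite /lowAnc; case: pickP => [m //|/= none].
case: (@arg_minnP _ u (fun w => anc w v) (fun w : 'I_n => nat_of_ord w) a) => m am hm.
by have := none m; rewrite /isMin am /=; move/negP; case; apply/forallP => w; apply/implyP; apply: hm.
Qed.

Lemma lowAnc_eq m v : isMin m v -> lowAnc v = m.
Proof. move=> h; have := isMin_ex (proj1 (andP h)); by move/isMin_uniq; apply. Qed.

Lemma upper_anc v : upper v -> exists u, anc u v.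
Proof. by case/existsP => u /andP[a _]; exists u. Qed.

Lemma lowAnc_spec v : upper v ->
  [/\ anc (lowAnc v) v, lowAnc v < v, forall u, anc u v -> lowAnc v <= u & ~~ upper (lowAnc v)].
Proof.
move=> hu; have [u0 a0] := upper_anc hu.
have /andP[a /forallP h] := isMin_ex a0.
have hm : forall u, anc u v -> lowAnc v <= u by move=> u; apply/implyP.
split => //.
- case/existsP: hu => u /andP[au lu]; exact: leq_ltn_trans (hm u au) lu.
- apply/existsP => -[w /andP[aw lw]].
  have := hm w (anc_trans aw a); by rewrite leqNgt lw.
Qed.

Definition isTop w v := ((w == v) || anc w v) && (par w == Some (lowAnc v)).
Definition top v := odflt v [pick w | isTop w v].

Lemma isTop_uniq w1 w2 v : isTop w1 v -> isTop w2 v -> w1 = w2.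
Proof.
have key : forall a b, anc a b -> par a = Some (lowAnc v) -> par b = Some (lowAnc v) -> False.
  move=> a b ab pa pb.
  have am := par_anc pa.
  case: (anc_par ab pb) => [e|h].
    by move: am; rewrite e anc_irr.
  exact: anc_asym h am.
move=> /andP[o1 /eqP p1] /andP[o2 /eqP p2].
have gen : forall w, (w == v) || anc w v -> w = v \/ anc w v.
  by move=> w /orP[/eqP->|]; [left|right].
case: (gen _ o1) => [e1|a1]; case: (gen _ o2) => [e2|a2].
- by rewrite e1 e2.
- by exfalso; apply: (key w2 w1 _ p2 p1); rewrite e1.
- by exfalso; apply: (key w1 w2 _ p1 p2); rewrite e2.
- case: (anc_total a1 a2) => // h; exfalso.
    exact: (key _ _ h p1 p2).
  exact: (key _ _ h p2 p1).
Qed.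

Lemma top_spec v : upper v -> isTop (top v) v.
Proof.
move=> hu; rewrite /top; case: pickP => [w //|/= none]; exfalso.
have [a _ _ _] := lowAnc_spec hu.
case/ancP: a => -[//|k] _ e.
move: e; rewrite iterS.
case E: (iter k (up par) (Some v)) => [w|//] /= pw.
have := none w; rewrite /isTop pw eqxx andbT.
case: k E => [[->]|k E]; first by rewrite eqxx.
have -> : anc w v by apply/ancP; exists k.+1.
by rewrite orbT.
Qed.

Lemma top_eq w v : isTop w v -> top v = w.
Proof.
move=> h; rewrite /top; case: pickP => [w' h'|/(_ w)]; last by rewrite h.
exact: isTop_uniq h' h.
Qed.

Lemma top_facts v : upper v -> (top v = v \/ anc (top v) v) /\ par (top v) = Some (lowAnc v).
Proof.
move=> h; case/andP: (top_spec h) => o /eqP p; split=> //.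
by case/orP: o => [/eqP->|]; [left|right].
Qed.

Lemma lowAnc_top v : upper v -> anc (lowAnc v) (top v) /\ lowAnc v < top v.
Proof.
move=> h; have [o p] := top_facts h; have [a l m lo] := lowAnc_spec h.
have at1 := par_anc p.
split=> //; case: o => [->//|at2].
have := m _ at2; rewrite leq_eqVlt => /orP[/eqP e|//]; exfalso.
by move: at1; rewrite (val_inj e) anc_irr.
Qed.

Lemma lowAnc_R r y : upper r -> upper y -> top r = top y -> lowAnc r = lowAnc y.
Proof.
move=> ur uy e; have [_ pr] := top_facts ur; have [_ py] := top_facts uy.
by rewrite e py in pr; case: pr.
Qed.

Lemma lowAnc_lt_R r y : upper r -> upper y -> top r = top y -> anc (lowAnc y) r /\ lowAnc y < r.
Proof.
move=> ur uy e; rewrite -(lowAnc_R ur uy e).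
by have [a l _ _] := lowAnc_spec ur.
Qed.

Lemma lower_lowAnc z y : upper y -> ~~ upper z -> anc z y -> lowAnc y = z \/ anc z (lowAnc y).
Proof.
move=> uy lz az; have [a l m lo] := lowAnc_spec uy.
case: (anc_total az a) => [e|h|h]; [by left|by right|exfalso].
have := lower_lt lz h; have := m _ az; rewrite leqNgt => /negP; by [].
Qed.

Lemma SRa x y : anc x y -> upper x -> upper y ->
  (forall z, anc x z -> anc z y -> upper z) -> top x = top y.
Proof.
move=> axy ux uy B.
have [ax lx mx lox] := lowAnc_spec ux; have [ay ly my loy] := lowAnc_spec uy.
have e : lowAnc y = lowAnc x.
  case: (anc_total ay axy) => [e|h|h].
  - by rewrite e ux in loy.
  - apply/val_inj/eqP; rewrite eqn_leq (mx _ h) andbT.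
    exact: my _ (anc_trans ax axy).
  - by rewrite (B _ h ay) in loy.
have [o p] := top_facts ux.
symmetry; apply: top_eq; rewrite /isTop e p eqxx andbT.
case: o => [->|h]; first by rewrite axy orbT.
by rewrite (anc_trans h axy) orbT.
Qed.

Lemma SRb x z y : anc x z -> anc z y -> ~~ upper z -> upper x -> upper y -> top x != top y.
Proof.
move=> xz zy lz ux uy; apply/eqP => e.
have E := lowAnc_R ux uy e.
have [ax _ _ _] := lowAnc_spec ux.
case: (lower_lowAnc uy lz zy) => [h|h].
  by rewrite E h in ax; exact: anc_asym ax xz.
by rewrite -E in h; exact: anc_asym (anc_trans h ax) xz.
Qed.

Lemma NSR x y : anc x y -> upper x -> upper y -> top x != top y ->
  exists z, [/\ anc x z, anc z y & ~~ upper z].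
Proof.
move=> a ux uy ne.
case: (boolP [exists z, [&& anc x z, anc z y & ~~ upper z]]) => [/existsP[z /and3P[h1 h2 h3]]|/existsPn h].
  by exists z.
move/eqP: ne; case; apply: SRa => // z xz zy.
by move: (h z); rewrite xz zy /= negbK.
Qed.

Definition sameR x y := [&& upper x, upper y & top x == top y].

Lemma sameR_upper x y : sameR x y -> upper x /\ upper y.
Proof. by case/and3P. Qed.

Lemma SRmid x y z : anc x y -> anc y z -> sameR x z -> sameR x y /\ sameR y z.
Proof.
move=> xy yz /and3P[ux uz /eqP e].
have nolow : forall w, anc x w -> anc w z -> upper w.
  move=> w h1 h2; case: (boolP (upper w)) => // lw.
  by move: (SRb h1 h2 lw ux uz); rewrite e eqxx.
have uy := nolow _ xy yz.
split; rewrite /sameR ?ux ?uy ?uz /=; apply/eqP.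
  by apply: SRa => // w h1 h2; apply: nolow h1 (anc_trans h2 yz).
by apply: SRa => // w h1 h2; apply: nolow (anc_trans xy h1) h2.
Qed.

End Gen.

Section Comp.
Variable n : nat.
Implicit Types (A : {set 'I_n}) (v w : 'I_n).

Definition rk A v := #|[set w in A | w < v]|.
Definition comp A v := odflt v [pick w in A | rk A w == #|A| - (rk A v).+1].

Lemma rk_lt A v w : v \in A -> v < w -> rk A v < rk A w.
Proof.
move=> vA vw; apply: proper_card; apply/properP; split.
  by apply/subsetP => u; rewrite !inE => /andP[-> h]; exact: ltn_trans h vw.
by exists v; rewrite !inE ?vA ?ltnn ?vw.
Qed.

Lemma rk_mono A v w : v \in A -> w \in A -> (rk A v < rk A w) = (v < w).
Proof.
move=> vA wA; case: (ltngtP v w) => h.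
- exact: rk_lt.
- by apply/negbTE; rewrite -leqNgt ltnW // rk_lt.
- by rewrite (val_inj h) ltnn.
Qed.

Lemma rk_inj A : {in A &, injective (rk A)}.
Proof.
move=> v w vA wA e; case: (ltngtP v w) => h.
- by have := rk_lt vA h; rewrite e ltnn.
- by have := rk_lt wA h; rewrite e ltnn.
- exact: val_inj h.
Qed.

Lemma rk_bound A v : v \in A -> rk A v < #|A|.
Proof.
move=> vA; apply: proper_card; apply/properP; split.
  by apply/subsetP => u; rewrite !inE => /andP[].
by exists v; rewrite ?inE ?vA ?ltnn.
Qed.

Lemma rk_surj A k : k < #|A| -> exists2 w, w \in A & rk A w = k.
Proof.
move=> kA.
set s1 := [seq rk A w | w <- enum A].
have u1 : uniq s1.
  rewrite map_inj_in_uniq ?enum_uniq //.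
  by move=> v w; rewrite !mem_enum; apply: rk_inj.
have sub : {subset s1 <= iota 0 #|A|}.
  move=> x /mapP[w]; rewrite mem_enum => wA ->.
  by rewrite mem_iota add0n rk_bound.
have sz : size (iota 0 #|A|) <= size s1 by rewrite size_iota size_map -cardE.
have [_ eqs] := uniq_min_size u1 sub sz.
have : k \in s1 by rewrite eqs mem_iota add0n kA.
by case/mapP => w; rewrite mem_enum => wA ->; exists w.
Qed.

Lemma comp_spec A v : v \in A -> comp A v \in A /\ rk A (comp A v) = #|A| - (rk A v).+1.
Proof.
move=> vA; rewrite /comp; case: pickP => [w /andP[wA /eqP e]|none] //.
have b := rk_bound vA.
have kl : #|A| - (rk A v).+1 < #|A| by lia.
have [w wA e] := rk_surj kl.
by move: (none w); rewrite wA e eqxx.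
Qed.

Lemma compK A v : v \in A -> comp A (comp A v) = v.
Proof.
move=> vA; have [cA cr] := comp_spec vA; have [ccA ccr] := comp_spec cA.
apply: (rk_inj ccA vA); rewrite ccr cr.
have := rk_bound vA; lia.
Qed.

Lemma comp_lt A v w : v \in A -> w \in A -> (comp A v < comp A w) = (w < v).
Proof.
move=> vA wA; have [cA cr] := comp_spec vA; have [cwA cwr] := comp_spec wA.
rewrite -(rk_mono cA cwA) cr cwr -(rk_mono wA vA).
have := rk_bound vA; have := rk_bound wA; lia.
Qed.

End Comp.

Section Pi.
Variable n : nat.
Variable par : parent_fun n.
Hypothesis F : is_forest par.
Local Notation anc := (strict_anc par).
Local Notation upper := (upper par).
Local Notation top := (top par).

Definition Rset v := [set w | upper w && (top w == top v)].
Definition piR v := if upper v then comp (Rset v) v else v.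

Lemma in_Rset v : upper v -> v \in Rset v.
Proof. by move=> h; rewrite inE h eqxx. Qed.

Lemma piR_in v : upper v -> [/\ piR v \in Rset v, upper (piR v) & top (piR v) = top v].
Proof.
move=> h; rewrite /piR h; have [cA _] := comp_spec (in_Rset h).
by move: (cA); rewrite {1}inE => /andP[u /eqP t]; split.
Qed.

Lemma Rset_eq v w : top v = top w -> Rset v = Rset w.
Proof. by move=> e; apply/setP => x; rewrite !inE e. Qed.

Lemma piRK v : piR (piR v) = v.
Proof.
case: (boolP (upper v)) => uv; last by rewrite /piR (negPf uv) (negPf uv).
have [_ up' tp] := piR_in uv.
rewrite {1}/piR up' (Rset_eq tp) /piR uv compK //; exact: in_Rset.
Qed.

Lemma piR_lower v : ~~ upper v -> piR v = v.
Proof. by move=> h; rewrite /piR (negPf h). Qed.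

End Pi.

Notation upperG := upper (only parsing).
Notation lowAncG := lowAnc (only parsing).
Notation topG := top (only parsing).
Notation sameRG := sameR (only parsing).

Section Pat.
Variable n : nat.
Variable par : parent_fun n.
Hypothesis F : is_forest par.
Local Notation anc := (strict_anc par).

Lemma anc_neqn u v : anc u v -> (u : nat) != v.
Proof. by move=> a; apply/eqP => /val_inj e; move: a; rewrite e anc_irr. Qed.

Lemma mk3 a b c (x y z : nat) : anc a b -> anc b c ->
  (a < b) = (x < y) -> (a < c) = (x < z) -> (b < c) = (y < z) ->
  x != y -> x != z -> y != z -> contains par [:: x; y; z].
Proof.
move=> ab bc h1 h2 h3 n1 n2 n3.
have ac := anc_trans F ab bc.
have := anc_neqn ab; have := anc_neqn bc; have := anc_neqn ac => m1 m2 m3.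
apply/existsP; exists [tuple a; b; c]; apply/forallP => i; apply/forallP => j.
move: i j => [[|[|[|i]]] Hi] // [[|[|[|j]]] Hj] //; rewrite !(tnth_nth a) /= ?ab ?bc /=;
  apply/eqP; lia.
Qed.

Lemma mk4 a b c d (x y z w : nat) : anc a b -> anc b c -> anc c d ->
  (a < b) = (x < y) -> (a < c) = (x < z) -> (a < d) = (x < w) ->
  (b < c) = (y < z) -> (b < d) = (y < w) -> (c < d) = (z < w) ->
  x != y -> x != z -> x != w -> y != z -> y != w -> z != w ->
  contains par [:: x; y; z; w].
Proof.
move=> ab bc cd h1 h2 h3 h4 h5 h6 n1 n2 n3 n4 n5 n6.
have ac := anc_trans F ab bc; have bd := anc_trans F bc cd; have ad := anc_trans F ac cd.
have := anc_neqn ab; have := anc_neqn bc; have := anc_neqn ac => m1 m2 m3.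
have := anc_neqn cd; have := anc_neqn bd; have := anc_neqn ad => m4 m5 m6.
apply/existsP; exists [tuple a; b; c; d]; apply/forallP => i; apply/forallP => j.
move: i j => [[|[|[|[|i]]]] Hi] // [[|[|[|[|j]]]] Hj] //; rewrite !(tnth_nth a) /= ?ab ?bc ?cd /=;
  apply/eqP; lia.
Qed.

Lemma contains3 (x y z : nat) : contains par [:: x; y; z] ->
  exists a b c, [/\ anc a b, anc b c, (a < b) = (x < y), (a < c) = (x < z) & (b < c) = (y < z)].
Proof.
case/existsP => t /forallP H.
have h := fun (i j : 'I_3) => forallP (H i) j.
exists (tnth t (@Ordinal 3 0 isT)), (tnth t (@Ordinal 3 1 isT)), (tnth t (@Ordinal 3 2 isT)).
have /andP[/implyP e01 /eqP o01] := h (@Ordinal 3 0 isT) (@Ordinal 3 1 isT).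
have /andP[_ /eqP o02] := h (@Ordinal 3 0 isT) (@Ordinal 3 2 isT).
have /andP[/implyP e12 /eqP o12] := h (@Ordinal 3 1 isT) (@Ordinal 3 2 isT).
by split; [apply: e01|apply: e12|..].
Qed.

Lemma contains4 (x y z w : nat) : contains par [:: x; y; z; w] ->
  exists a b c d, [/\ anc a b, anc b c, anc c d,
   [/\ (a < b) = (x < y), (a < c) = (x < z) & (a < d) = (x < w)] &
   [/\ (b < c) = (y < z), (b < d) = (y < w) & (c < d) = (z < w)]].
Proof.
case/existsP => t /forallP H.
have h := fun (i j : 'I_4) => forallP (H i) j.
exists (tnth t (@Ordinal 4 0 isT)), (tnth t (@Ordinal 4 1 isT)), (tnth t (@Ordinal 4 2 isT)), (tnth t (@Ordinal 4 3 isT)).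
have /andP[/implyP e01 /eqP o01] := h (@Ordinal 4 0 isT) (@Ordinal 4 1 isT).
have /andP[_ /eqP o02] := h (@Ordinal 4 0 isT) (@Ordinal 4 2 isT).
have /andP[_ /eqP o03] := h (@Ordinal 4 0 isT) (@Ordinal 4 3 isT).
have /andP[/implyP e12 /eqP o12] := h (@Ordinal 4 1 isT) (@Ordinal 4 2 isT).
have /andP[_ /eqP o13] := h (@Ordinal 4 1 isT) (@Ordinal 4 3 isT).
have /andP[/implyP e23 /eqP o23] := h (@Ordinal 4 2 isT) (@Ordinal 4 3 isT).
by split; [apply: e01|apply: e12|apply: e23|split|split].
Qed.

Lemma c123 a b c : anc a b -> anc b c -> a < b -> b < c -> contains par [:: 1; 2; 3].
Proof. by move=> ab bc h1 h2; apply: (mk3 ab bc) => //=; lia. Qed.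
Lemma c132 a b c : anc a b -> anc b c -> a < c -> c < b -> contains par [:: 1; 3; 2].
Proof. by move=> ab bc h1 h2; apply: (mk3 ab bc) => //=; lia. Qed.
Lemma c2413 a b c d : anc a b -> anc b c -> anc c d -> c < a -> a < d -> d < b ->
  contains par [:: 2; 4; 1; 3].
Proof. by move=> ab bc cd h1 h2 h3; apply: (mk4 ab bc cd) => //=; lia. Qed.
Lemma c3142 a b c d : anc a b -> anc b c -> anc c d -> b < d -> d < a -> a < c ->
  contains par [:: 3; 1; 4; 2].
Proof. by move=> ab bc cd h1 h2 h3; apply: (mk4 ab bc cd) => //=; lia. Qed.
Lemma c2314 a b c d : anc a b -> anc b c -> anc c d -> c < a -> a < b -> b < d ->
  contains par [:: 2; 3; 1; 4].
Proof. by move=> ab bc cd h1 h2 h3; apply: (mk4 ab bc cd) => //=; lia. Qed.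
Lemma c3124 a b c d : anc a b -> anc b c -> anc c d -> b < c -> c < a -> a < d ->
  contains par [:: 3; 1; 2; 4].
Proof. by move=> ab bc cd h1 h2 h3; apply: (mk4 ab bc cd) => //=; lia. Qed.

End Pat.

Definition S1 : seq pattern := [:: [:: 1; 2; 3]; [:: 2; 4; 1; 3]; [:: 3; 1; 4; 2]].
Definition S2 : seq pattern := [:: [:: 1; 3; 2]; [:: 2; 3; 1; 4]; [:: 3; 1; 2; 4]].

Lemma av1 n (par : parent_fun n) : avoids par S1 ->
  [/\ ~~ contains par [:: 1; 2; 3], ~~ contains par [:: 2; 4; 1; 3] & ~~ contains par [:: 3; 1; 4; 2]].
Proof. by rewrite /avoids /S1 /= => /and4P[]. Qed.

Lemma av2 n (par : parent_fun n) : avoids par S2 ->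
  [/\ ~~ contains par [:: 1; 3; 2], ~~ contains par [:: 2; 3; 1; 4] & ~~ contains par [:: 3; 1; 2; 4]].
Proof. by rewrite /avoids /S2 /= => /and4P[]. Qed.

Ltac clean0 := repeat match goal with
 | H : ?T |- _ => lazymatch T with
    | is_true (_ < _) => fail | is_true (_ <= _) => fail | is_true (_ != _) => fail
    | (_ < _) = _ => fail | (_ <= _) = _ => fail
    | is_true (~~ (_ < _)) => fail | is_true (~~ (_ <= _)) => fail
    | _ => clear H end end.
Ltac slia0 := clean0; lia.
Section Av.
Variable n : nat.
Variable par : parent_fun n.
Hypothesis F : is_forest par.
Hypothesis Hs : avoids par S1 \/ avoids par S2.
Local Notation anc := (strict_anc par).
Local Notation upper := (upper par).
Local Notation top := (top par).
Local Notation lowAnc := (lowAnc par).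
Local Notation sameR := (sameR par).
Local Notation piR := (piR par).

Lemma SepA_claim x y r : upper y -> ~~ upper x -> anc x (lowAnc y) -> upper r -> top r = top y ->
  (x < r) = (x < top y).
Proof.
move=> uy lx axp ur e.
have [apr lpr] := lowAnc_lt_R F ur uy e.
have [apt lpt] := lowAnc_top F uy.
have [_ _ _ lop] := lowAnc_spec F uy.
have lpx := lower_lt F lop axp.
have [o _] := top_facts F ur; rewrite e in o.
case: o => [->//|atr].
have axt := anc_trans F axp apt; have axr := anc_trans F axt atr.
have n1 := anc_neqn F axt; have n2 := anc_neqn F axr.
case h1: (x < r); case h2: (x < top y) => //; exfalso.
- case: Hs => [/av1[h _ _]|/av2[_ _ h]]; move/negP: h; apply.
    by apply: (c123 F apt atr) => //; slia0.
  by apply: (c3124 F axp apt atr) => //; slia0.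
- case: Hs => [/av1[_ _ h]|/av2[h _ _]]; move/negP: h; apply.
    by apply: (c3142 F axp apt atr) => //; slia0.
  by apply: (c132 F apt atr) => //; slia0.
Qed.

Lemma SepA x y r : ~~ upper x -> anc x y -> upper y -> upper r -> top r = top y -> (x < r) = (x < y).
Proof.
move=> lx axy uy ur e.
have [ay ly my loy] := lowAnc_spec F uy.
case: (anc_total F axy ay) => [E|h|h].
- have [_ lpr] := lowAnc_lt_R F ur uy e.
  by rewrite E lpr ly.
- rewrite (SepA_claim uy lx h ur e) (SepA_claim uy lx h uy (erefl _)) //.
- have := lower_lt F lx h; have := my _ axy; slia0.
Qed.

Lemma SepB x y r : upper x -> anc x y -> ~~ upper y -> upper r -> top r = top x -> y < r.
Proof.
move=> ux axy ly ur e.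
have [_ lpr] := lowAnc_lt_R F ur ux e.
have [ax _ _ _] := lowAnc_spec F ux.
have := lower_lt F ly (anc_trans F ax axy); slia0.
Qed.

Lemma SepC x y z r1 r2 : upper x -> upper y -> anc x z -> anc z y -> ~~ upper z ->
  upper r1 -> top r1 = top x -> upper r2 -> top r2 = top y -> r2 < r1.
Proof.
move=> ux uy xz zy lz ur1 e1 ur2 e2.
have [ax lx mx lox] := lowAnc_spec F ux.
have [ay ly my loy] := lowAnc_spec F uy.
have axp2 : anc x (lowAnc y).
  case: (lower_lowAnc F uy lz zy) => [E|h]; first by rewrite E.
  exact: (anc_trans F xz h).
have ap1p2 := anc_trans F ax axp2.
have claim := SepA_claim uy lox ap1p2 ur2 e2.
have [_ lp1r1] := lowAnc_lt_R F ur1 ux e1.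
have [ap2t lp2t] := lowAnc_top F uy.
have lp2p1 := lower_lt F loy ap1p2.
have axt := anc_trans F axp2 ap2t.
have n1 := anc_neqn F axt.
have nr2 : (r2 : nat) != lowAnc x.
  by apply/eqP => /val_inj E; move: lox; rewrite -E ur2.
case h: (lowAnc x < top y).
  exfalso; case: (ltnP x (top y)) => h2.
  - case: Hs => [/av1[hh _ _]|/av2[_ hh _]]; move/negP: hh; apply.
      by apply: (c123 F ax axt) => //; slia0.
    by apply: (c2314 F ax axp2 ap2t) => //; slia0.
  - case: Hs => [/av1[_ hh _]|/av2[hh _ _]]; move/negP: hh; apply.
      by apply: (c2413 F ax axp2 ap2t) => //; slia0.
    by apply: (c132 F ax axt) => //; slia0.
move: claim; rewrite h; slia0.
Qed.

Lemma TW x y : anc x y -> (piR x < piR y) = (x < y) (+) sameR x y.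
Proof.
move=> axy; have nxy := anc_neqn F axy.
rewrite /sameR.
case ux: (upper x); case uy: (upper y) => /=.
- case e: (top x == top y) => /=.
  + have [px _ _] := piR_in ux; have [py _ _] := piR_in uy.
    rewrite /piR ux uy (Rset_eq (eqP e)).
    rewrite (Rset_eq (eqP e)) in px.
    have xin : x \in Rset par y by rewrite inE ux (eqP e) eqxx.
    have yin := in_Rset uy.
    rewrite comp_lt //; slia0.
  + have [z [xz zy lz]] := NSR F axy ux uy (negbT e).
    have [_ u1 t1] := piR_in ux; have [_ u2 t2] := piR_in uy.
    have := SepC ux uy xz zy lz u1 t1 u2 t2.
    have := SepC ux uy xz zy lz ux (erefl _) uy (erefl _).
    slia0.
- have [_ u1 t1] := piR_in ux.
  rewrite (piR_lower (negbT uy)).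
  have := SepB ux axy (negbT uy) u1 t1; have := SepB ux axy (negbT uy) ux (erefl _); slia0.
- have [_ u2 t2] := piR_in uy.
  rewrite (piR_lower (negbT ux)).
  rewrite addbF; exact: (SepA (negbT ux) axy uy u2 t2).
- by rewrite (piR_lower (negbT ux)) (piR_lower (negbT uy)) addbF.
Qed.

Lemma UPUP x y : anc x y -> upper x -> x < y -> sameR x y.
Proof.
move=> axy ux lt.
case uy: (upper y); last by have := lower_lt F (negbT uy) axy; slia0.
case e: (top x == top y); first by rewrite /sameR ux uy e.
have [z [xz zy lz]] := NSR F axy ux uy (negbT e).
have := SepC ux uy xz zy lz ux (erefl _) uy (erefl _); slia0.
Qed.

End Av.

Lemma MONO1 n (par : parent_fun n) x y : is_forest par -> avoids par S1 ->
  strict_anc par x y -> sameR par x y -> y < x.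
Proof.
move=> F /av1[h _ _] axy /and3P[ux uy /eqP e].
have E := lowAnc_R F ux uy e.
have [ax lx _ _] := lowAnc_spec F ux.
case: (ltnP y x) => // h2; exfalso; move/negP: h; apply.
have := anc_neqn F axy => nn.
by apply: (c123 F ax axy) => //; slia0.
Qed.

Lemma MONO2 n (par : parent_fun n) x y : is_forest par -> avoids par S2 ->
  strict_anc par x y -> sameR par x y -> x < y.
Proof.
move=> F /av2[h _ _] axy /and3P[ux uy /eqP e].
have E := lowAnc_R F ux uy e.
have [ax lx _ _] := lowAnc_spec F ux.
have [_ ly _ _] := lowAnc_spec F uy.
case: (ltnP x y) => // h2; exfalso; move/negP: h; apply.
have := anc_neqn F axy => nn.
by apply: (c132 F ax axy) => //; rewrite ?E; slia0.
Qed.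

Ltac clean := repeat match goal with
 | H : ?T |- _ => lazymatch T with
    | is_true (_ < _) => fail | is_true (_ <= _) => fail | is_true (_ != _) => fail
    | (_ < _) = _ => fail | (_ <= _) = _ => fail | @eq bool _ _ => fail
    | is_true (~~ (_ < _)) => fail | is_true (~~ (_ <= _)) => fail
    | _ => clear H end end.
Ltac slia := clean; lia.

Definition Phi n (par : parent_fun n) : parent_fun n :=
  [ffun v => omap (piR par) (par (piR par v))].

Section PhiS.
Variable n : nat.
Variable par : parent_fun n.
Hypothesis F : is_forest par.
Local Notation anc := (strict_anc par).
Local Notation pi := (piR par).
Local Notation par' := (Phi par).

Lemma pi_inj : injective pi.
Proof. exact: can_inj (piRK par). Qed.

Lemma Phi_iter k v : iter k (up par') (Some (pi v)) = omap pi (iter k (up par) (Some v)).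
Proof.
elim: k => [//|k IH]; rewrite !iterS IH.
by case: (iter k (up par) (Some v)) => [w|] //=; rewrite /up /= ffunE piRK.
Qed.

Lemma Phi_forest : is_forest par'.
Proof.
apply/forallP => v; rewrite -[v](piRK par) Phi_iter.
by have /eqP -> := forallP F (pi v).
Qed.

Lemma omap_pi_eq (X : option 'I_n) u : (omap pi X == Some (pi u)) = (X == Some u).
Proof. by case: X => [w|] //=; rewrite !eqE /= (inj_eq pi_inj). Qed.

Lemma Phi_anc u v : strict_anc par' (pi u) (pi v) = anc u v.
Proof.
apply/existsP/existsP => -[k h]; exists k; move: h;
  by rewrite Phi_iter omap_pi_eq.
Qed.

Lemma Phi_anc' u v : strict_anc par' u v = anc (pi u) (pi v).
Proof. by rewrite -Phi_anc !piRK. Qed.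

Lemma Phi_contains3 (x y z : nat) : contains par' [:: x; y; z] ->
  exists a b c, [/\ anc a b, anc b c, (pi a < pi b) = (x < y), (pi a < pi c) = (x < z)
     & (pi b < pi c) = (y < z)].
Proof.
case/contains3 => a [b [c [h1 h2 h3 h4 h5]]].
exists (pi a), (pi b), (pi c); rewrite !piRK -!Phi_anc' //.
Qed.

Lemma Phi_contains4 (x y z w : nat) : contains par' [:: x; y; z; w] ->
  exists a b c d, [/\ anc a b, anc b c, anc c d,
   [/\ (pi a < pi b) = (x < y), (pi a < pi c) = (x < z) & (pi a < pi d) = (x < w)] &
   [/\ (pi b < pi c) = (y < z), (pi b < pi d) = (y < w) & (pi c < pi d) = (z < w)]].
Proof.
case/contains4 => a [b [c [d [h1 h2 h3 h4 h5]]]].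
exists (pi a), (pi b), (pi c), (pi d); rewrite !piRK -!Phi_anc' //.
Qed.

Local Notation upper := (upper par).
Local Notation sameR := (sameR par).

Lemma UP1 x y : avoids par S1 -> anc x y -> upper x -> y < x.
Proof.
move=> h axy ux; have := anc_neqn F axy => nn.
case: (ltnP x y) => l; last by slia.
have := MONO1 F h axy (UPUP F (or_introl h) axy ux l); slia.
Qed.

Lemma UPT2 x y : avoids par S2 -> anc x y -> upper x -> (x < y) (+) sameR x y = false.
Proof.
move=> h axy ux.
case s: (sameR x y); first by rewrite (MONO2 F h axy s).
by case: (ltnP x y) => // l; rewrite (UPUP F (or_intror h) axy ux l) in s.
Qed.

Lemma D1 : avoids par S1 -> avoids par' S2.
Proof.
move=> h1; have Hs : avoids par S1 \/ avoids par S2 by left.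
have TWa := TW F Hs.
have M := MONO1 F h1.
rewrite /avoids /S2 /= !andbT; apply/and3P; split; apply/negP.
- case/Phi_contains3 => a [b [c [ab bc tab tac tbc]]] /=.
  have ac := anc_trans F ab bc.
  rewrite (TWa _ _ ab) in tab; rewrite (TWa _ _ ac) in tac; rewrite (TWa _ _ bc) in tbc.
  have := anc_neqn F ab; have := anc_neqn F ac; have := anc_neqn F bc => n1 n2 n3.
  case sac: (sameR a c).
    have [sab sbc] := SRmid F ab bc sac.
    have := M _ _ bc sbc; rewrite sbc addbT in tbc; slia.
  rewrite sac addbF in tac.
  case ua: (upper a); first by have := UP1 h1 ac ua; slia.
  have sab : sameR a b = false by apply/negP => /sameR_upper[]; rewrite ua.
  rewrite sab addbF in tab.
  have ub := upperI ab tab; have uc := upperI ac tac.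
  case sbc: (sameR b c).
    have := M _ _ bc sbc; rewrite sbc addbT in tbc; slia.
  rewrite sbc addbF in tbc.
  have ntop : top par b != top par c by apply/negP => e; rewrite /sameRG ub uc e in sbc.
  have [z [bz zc lz]] := NSR F bc ub uc ntop.
  have az := anc_trans F ab bz.
  have := lower_lt F lz az => za.
  have := av1 h1 => -[_ hh _]; move/negP: hh; apply.
  by apply: (c2413 F ab bz zc) => //; slia.
- case/Phi_contains4 => a [b [c [d [ab bc cd [tab tac tad] [tbc tbd tcd]]]]] /=.
  have ac := anc_trans F ab bc; have bd := anc_trans F bc cd; have ad := anc_trans F ac cd.
  rewrite (TWa _ _ ab) in tab; rewrite (TWa _ _ ac) in tac; rewrite (TWa _ _ ad) in tad.
  rewrite (TWa _ _ bc) in tbc; rewrite (TWa _ _ bd) in tbd; rewrite (TWa _ _ cd) in tcd.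
  have := anc_neqn F ab; have := anc_neqn F ac; have := anc_neqn F ad => n1 n2 n3.
  have := anc_neqn F bc; have := anc_neqn F bd; have := anc_neqn F cd => n4 n5 n6.
  case sad: (sameR a d).
    have [sac _] := SRmid F ac cd sad.
    have := M _ _ ac sac; rewrite sac addbT in tac; slia.
  rewrite sad addbF in tad.
  case ua: (upper a); first by have := UP1 h1 ad ua; slia.
  have sab : sameR a b = false by apply/negP => /sameR_upper[]; rewrite ua.
  rewrite sab addbF in tab.
  have ub := upperI ab tab.
  case sbd: (sameR b d); last first.
    rewrite sbd addbF in tbd; have := UP1 h1 bd ub; slia.
  have [sbc _] := SRmid F bc cd sbd.
  have := M _ _ bc sbc; rewrite sbc addbT in tbc; slia.
- case/Phi_contains4 => a [b [c [d [ab bc cd [tab tac tad] [tbc tbd tcd]]]]] /=.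
  have ac := anc_trans F ab bc; have bd := anc_trans F bc cd; have ad := anc_trans F ac cd.
  rewrite (TWa _ _ ab) in tab; rewrite (TWa _ _ ac) in tac; rewrite (TWa _ _ ad) in tad.
  rewrite (TWa _ _ bc) in tbc; rewrite (TWa _ _ bd) in tbd; rewrite (TWa _ _ cd) in tcd.
  have := anc_neqn F ab; have := anc_neqn F ac; have := anc_neqn F ad => n1 n2 n3.
  have := anc_neqn F bc; have := anc_neqn F bd; have := anc_neqn F cd => n4 n5 n6.
  case sad: (sameR a d).
    have [sab _] := SRmid F ab bd sad.
    have := M _ _ ab sab; rewrite sab addbT in tab; slia.
  rewrite sad addbF in tad.
  case ua: (upper a); first by have := UP1 h1 ad ua; slia.
  have sab : sameR a b = false by apply/negP => /sameR_upper[]; rewrite ua.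
  have sac : sameR a c = false by apply/negP => /sameR_upper[]; rewrite ua.
  rewrite sab addbF in tab; rewrite sac addbF in tac.
  case scd: (sameR c d).
    have := M _ _ cd scd; slia.
  rewrite scd addbF in tcd.
  case uc: (upper c); first by have := UP1 h1 cd uc; slia.
  have sbc : sameR b c = false by apply/negP => /sameR_upper[_]; rewrite uc.
  rewrite sbc addbF in tbc.
  have := lower_lt F (negbT uc) bc; slia.
Qed.

Lemma D2 : avoids par S2 -> avoids par' S1.
Proof.
move=> h2; have Hs : avoids par S1 \/ avoids par S2 by right.
have TWa := TW F Hs.
have U := UPT2 h2.
have lowS : forall x y, ~~ upper x -> sameR x y = false.
  by move=> x y lx; apply/negP => /sameR_upper[]; rewrite (negPf lx).
rewrite /avoids /S1 /= !andbT; apply/and3P; split; apply/negP.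
- case/Phi_contains3 => a [b [c [ab bc tab tac tbc]]] /=.
  rewrite (TWa _ _ ab) in tab; rewrite (TWa _ _ bc) in tbc.
  case ua: (upper a); first by rewrite U in tab.
  rewrite lowS ?ua // addbF in tab.
  have ub := upperI ab tab.
  by rewrite U in tbc.
- case/Phi_contains4 => a [b [c [d [ab bc cd [tab tac tad] [tbc tbd tcd]]]]] /=.
  have ac := anc_trans F ab bc; have bd := anc_trans F bc cd; have ad := anc_trans F ac cd.
  rewrite (TWa _ _ ab) in tab; rewrite (TWa _ _ ad) in tad.
  rewrite (TWa _ _ bd) in tbd; rewrite (TWa _ _ cd) in tcd.
  have := anc_neqn F bd => n5.
  case ua: (upper a); first by rewrite U in tab.
  rewrite lowS ?ua // addbF in tab; rewrite lowS ?ua // addbF in tad.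
  case uc: (upper c); first by rewrite U in tcd.
  case sbd: (sameR b d).
    by have [_ /sameR_upper[]] := SRmid F bc cd sbd; rewrite uc.
  rewrite sbd addbF in tbd.
  have := av2 h2 => -[hh _ _]; move/negP: hh; apply.
  by apply: (c132 F ab bd) => //; slia.
- case/Phi_contains4 => a [b [c [d [ab bc cd [tab tac tad] [tbc tbd tcd]]]]] /=.
  have ac := anc_trans F ab bc; have bd := anc_trans F bc cd; have ad := anc_trans F ac cd.
  rewrite (TWa _ _ ac) in tac; rewrite (TWa _ _ ad) in tad; rewrite (TWa _ _ bd) in tbd.
  have := anc_neqn F ad => n3.
  case ua: (upper a); first by rewrite U in tac.
  rewrite lowS ?ua // addbF in tac; rewrite lowS ?ua // addbF in tad.
  case ub: (upper b); first by rewrite U in tbd.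
  rewrite lowS ?ub // addbF in tbd.
  have := av2 h2 => -[hh _ _]; move/negP: hh; apply.
  by apply: (c132 F bc cd) => //; slia.
Qed.

End PhiS.


Section Inv.
Variable n : nat.
Variable par : parent_fun n.
Hypothesis F : is_forest par.
Hypothesis Hs : avoids par S1 \/ avoids par S2.
Local Notation anc := (strict_anc par).
Local Notation pi := (piR par).
Local Notation par' := (Phi par).
Local Notation upper := (upper par).
Local Notation lowAnc := (lowAnc par).
Local Notation top := (top par).

Lemma upper_Phi v : upperG par' (pi v) = upper v.
Proof.
case uv: (upper v).
  have [a l _ lo] := lowAnc_spec F uv.
  apply/existsP; exists (pi (lowAnc v)); rewrite Phi_anc a /=.
  rewrite (TW F Hs a) l /=.
  by case s: (sameRG par (lowAnc v) v) => //; case/sameR_upper: s; rewrite (negPf lo).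
apply/negbTE/existsP => -[u' /andP[a l]].
rewrite Phi_anc' piRK in a.
move: l; rewrite -{1}(piRK par u') (TW F Hs a).
have s : sameRG par (pi u') v = false by apply/negP => /sameR_upper[_]; rewrite uv.
rewrite s addbF.
have := lower_lt F (negbT uv) a; slia.
Qed.

Lemma lowAnc_Phi v : upper v -> lowAncG par' (pi v) = pi (lowAnc v).
Proof.
move=> uv; have [a l m lo] := lowAnc_spec F uv.
apply: lowAnc_eq; rewrite /isMin Phi_anc a /=.
apply/forallP => u'; apply/implyP => au.
rewrite -(piRK par u') in au *; rewrite Phi_anc in au.
set u := pi u' in au *.
have mu := m _ au.
case: (anc_total F a au) => [E|h|h].
- by rewrite E.
- have := TW F Hs h.
  have s : sameRG par (lowAnc v) u = false by apply/negP => /sameR_upper[]; rewrite (negPf lo).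
  rewrite s addbF; have := anc_neqn F h; slia.
- have := TW F Hs h.
  have s : sameRG par u (lowAnc v) = false by apply/negP => /sameR_upper[_]; rewrite (negPf lo).
  rewrite s addbF; have := anc_neqn F h; slia.
Qed.

Lemma top_Phi v : upper v -> topG par' (pi v) = pi (top v).
Proof.
move=> uv; apply: (top_eq (Phi_forest F)).
have [o p] := top_facts F uv.
rewrite /isTop lowAnc_Phi // ffunE piRK p /= eqxx andbT.
rewrite (inj_eq (can_inj (piRK par))) Phi_anc.
by case: o => [->|->]; rewrite ?eqxx ?orbT.
Qed.

Lemma Rset_pi_mem x v : (pi x \in Rset par v) = (x \in Rset par v).
Proof.
have H : forall y, y \in Rset par v -> pi y \in Rset par v.
  move=> y; rewrite inE => /andP[uy /eqP e].
  have [_ up tp] := piR_in uy.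
  by rewrite inE up tp e eqxx.
apply/idP/idP => [h|]; last exact: H.
by rewrite -(piRK par x); apply: H.
Qed.

Lemma piR_Phi v : piR par' (pi v) = v.
Proof.
case uv: (upper v); last first.
  by rewrite {1}/piR upper_Phi uv (piR_lower (negbT uv)).
have RE : Rset par' (pi v) = Rset par v.
  apply/setP => w'; rewrite -(piRK par w') Rset_pi_mem.
  rewrite !inE upper_Phi.
  case uw: (upper (pi w')) => //=.
  by rewrite top_Phi // top_Phi // (inj_eq (can_inj (piRK par))).
rewrite {1}/piR upper_Phi uv RE.
rewrite {1}/piR uv compK //; exact: in_Rset.
Qed.

Lemma piR_Phi_eq w : piR par' w = pi w.
Proof. by rewrite -{1}(piRK par w) piR_Phi. Qed.

Lemma PhiK : Phi par' = par.
Proof.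
apply/ffunP => v; rewrite ffunE piR_Phi_eq ffunE piRK.
by case: (par v) => [w|] //=; rewrite piR_Phi_eq piRK.
Qed.

End Inv.

Lemma card_Phi m (A B : {set parent_fun m}) :
  (forall p, p \in A -> Phi p \in B) -> {in A &, injective (@Phi m)} -> #|A| <= #|B|.
Proof.
move=> hAB inj; rewrite -(card_in_imset inj); apply: subset_leq_card.
by apply/subsetP => x /imsetP[p pA ->]; apply: hAB.
Qed.

Lemma main m : num_avoiding S1 m = num_avoiding S2 m.
Proof.
rewrite /num_avoiding; apply/eqP; rewrite eqn_leq; apply/andP; split; apply: card_Phi.
- move=> p; rewrite !inE => /andP[f a]; by rewrite Phi_forest // D1.
- move=> p1 p2; rewrite !inE => /andP[f1 a1] /andP[f2 a2] e.
  exact: (etrans (esym (PhiK f1 (or_introl a1))) (etrans (congr1 (@Phi _) e) (PhiK f2 (or_introl a2)))).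
- move=> p; rewrite !inE => /andP[f a]; by rewrite Phi_forest // D2.
- move=> p1 p2; rewrite !inE => /andP[f1 a1] /andP[f2 a2] e.
  exact: (etrans (esym (PhiK f1 (or_intror a1))) (etrans (congr1 (@Phi _) e) (PhiK f2 (or_intror a2)))).
Qed.

Theorem corollary3p19 :
  forest_wilf_equiv [:: [:: 1; 2; 3]; [:: 2; 4; 1; 3]; [:: 3; 1; 4; 2]]
                    [:: [:: 1; 3; 2]; [:: 2; 3; 1; 4]; [:: 3; 1; 2; 4]].
Proof. exact: main. Qed.
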